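(* Let $L_1',L_2'\subseteq\mathcal{P}$ be simple event logs, $bk\in\mathcal{A}^*$, $n\in\mathbb{N}_{\ge1}$, $M_1=ms^{L_1',n}(bk)$ and $M_2=ms^{L_2',n}(bk)$. Let $CG(M_1,M_2)$ be the set of pairs $(g_1',g_2')$ where $g_1'$ is a group of $M_1$, $g_2'$ is a group of $M_2$, and $g_1'\overset{n}{\sim}g_2'$, and set $F(M_1,M_2)=\sum_{(g_1',g_2')\in CG(M_1,M_2)}\big(|g_1'|-\min(|g_1'|,|g_2'|)\big)$. Then for every linker $f$ (w.r.t. $n$) from $L_1'$ to $L_2'$, at least $F(M_1,M_2)$ elements $p_1'\in M_1$ satisfy $f(p_1')\notin M_2$; more precisely, for each $(g_1',g_2')\in CG(M_1,M_2)$, at least $|g_1'|-\min(|g_1'|,|g_2'|)$ elements of $g_1'$ are not mapped by $f$ into $M_2$.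
   Context: $\mathcal{P}=\mathcal{C}\times\mathcal{A}^*\times\mathcal{S}$ is the set of simple process instances $p=(c,\sigma,s)$ (case id, sequence of activities, sensitive value) with projections $\pi_c,\pi_\sigma,\pi_s$; a simple event log is a finite $L\subseteq\mathcal{P}$ in which elements with equal case ids are equal. $\sqsubseteq$ is the (not necessarily contiguous) subsequence relation; $pref(\langle a_1,\dots,a_m\rangle)=\{\langle a_1,\dots,a_k\rangle\mid 1\le k\le m\}$; $LCS(\sigma_1,\sigma_2)$ is the set of longest common subsequences, $LCS^{\sigma_1}_{\sigma_2}$ their length, and $SCS^{\sigma_1}_{\sigma_2}$ the length of a shortest common super-sequence. Specialization: $p'\preceq_n p$ iff $\pi_\sigma(p')\sqsubseteq\pi_\sigma(p)$, $|\pi_\sigma(p)|\le|\pi_\sigma(p')|+n$, and $\pi_s(p)=\pi_s(p')$. Matching set: $ms^{L',n}(bk)=\{p'\in L'\mid \exists p\in\mathcal{P}: p'\preceq_n p \wedge bk\sqsubseteq\pi_\sigma(p)\}$. A group of a matching set $M$ is a nonempty set of the form $\{p\in M\mid \pi_s(p)=v\}$ for some $v\in\mathcal{S}$. Linker: a total injective function $f:L_1'\to L_2'$ such that for every $p_1'\in L_1'$ there exist $p_1,p_2\in\mathcal{P}$ with $p_1'\preceq_n p_1$, $f(p_1')\preceq_n p_2$, $\pi_s(p_1)=\pi_s(p_2)$, and $\pi_\sigma(p_1)\in pref(\pi_\sigma(p_2))$. Comparable sequences: $\sigma_1\overset{n}{\sim}\sigma_2$ iff $n\ge|\sigma_1|-LCS^{\sigma_1}_{\sigma_2}$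 in case some $\sigma\in LCS(\sigma_1,\sigma_2)$ lies in $pref(\sigma_2)$, and $n\ge SCS^{\sigma_1}_{\sigma_2}-\min(|\sigma_1|,|\sigma_2|)$ otherwise. Comparable process instances: $p_1\overset{n}{\sim}p_2$ iff $\pi_s(p_1)=\pi_s(p_2)$ and $\pi_\sigma(p_1)\overset{n}{\sim}\pi_\sigma(p_2)$. Comparable groups: $g_1'\overset{n}{\sim}g_2'$ iff $p_1'\overset{n}{\sim}p_2'$ for all $p_1'\in g_1'$, $p_2'\in g_2'$. *)

(* Defs.v *)
From HB Require Import structures.
From mathcomp Require Import all_boot.
From mathcomp Require Import finmap.
From mathcomp Require Import boolp.

Set Implicit Arguments.
Unset Strict Implicit.
Unset Printing Implicit Defensive.

Local Open Scope fset_scope.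

Section Defs.
(* C: case ids, A: activities, S: sensitive values *)
Variables (C A S : choiceType).

Definition proc := ((C * seq A) * S)%type.
Definition pc (p : proc) : C := p.1.1.
Definition psig (p : proc) : seq A := p.1.2.
Definition ps (p : proc) : S := p.2.

Definition simple_log (L : {fset proc}) : Prop :=
  {in L &, forall p q, pc p = pc q -> p = q}.

Definition in_pref (s t : seq A) : bool := prefix s t && (0 < size s).

Definition lcs_pred (s1 s2 : seq A) : pred nat :=
  fun k => `[< exists s, [/\ subseq s s1, subseq s s2 & size s = k] >].

Lemma lcs_ex (s1 s2 : seq A) : exists k, lcs_pred s1 s2 k.
Proof. by exists 0; apply/asboolP; exists [::]; rewrite !sub0seq. Qed.

Lemma lcs_bnd (s1 s2 : seq A) : forall k, lcs_pred s1 s2 k -> k <= size s1.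
Proof. by move=> k /asboolP [s [h1 _ <-]]; apply: size_subseq. Qed.

Definition lcs_len (s1 s2 : seq A) : nat := ex_maxn (lcs_ex s1 s2) (@lcs_bnd s1 s2).

Definition is_lcs (s1 s2 s : seq A) : bool :=
  [&& subseq s s1, subseq s s2 & size s == lcs_len s1 s2].

Definition scs_pred (s1 s2 : seq A) : pred nat :=
  fun k => `[< exists s, [/\ subseq s1 s, subseq s2 s & size s = k] >].

Lemma scs_ex (s1 s2 : seq A) : exists k, scs_pred s1 s2 k.
Proof.
exists (size (s1 ++ s2)); apply/asboolP; exists (s1 ++ s2); split => //.
- by rewrite -{1}(cats0 s1) cat_subseq ?sub0seq.
- by rewrite -{1}(cat0s s2) cat_subseq ?sub0seq.
Qed.

Definition scs_len (s1 s2 : seq A) : nat := ex_minn (scs_ex s1 s2).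

Definition comparable_seq (n : nat) (s1 s2 : seq A) : Prop :=
  if `[< exists s, is_lcs s1 s2 s /\ in_pref s s2 >]
  then size s1 - lcs_len s1 s2 <= n
  else scs_len s1 s2 - minn (size s1) (size s2) <= n.

Definition comparable_proc (n : nat) (p1 p2 : proc) : Prop :=
  ps p1 = ps p2 /\ comparable_seq n (psig p1) (psig p2).

Definition comparable_group (n : nat) (g1 g2 : {fset proc}) : Prop :=
  {in g1 & g2, forall p1 p2, comparable_proc n p1 p2}.

Definition spec (n : nat) (p' p : proc) : Prop :=
  [/\ subseq (psig p') (psig p), size (psig p) <= size (psig p') + n
    & ps p = ps p'].

Definition ms (L : {fset proc}) (n : nat) (bk : seq A) : {fset proc} :=
  [fset p' in L | `[< exists p : proc, spec n p' p /\ subseq bk (psig p) >]].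

Definition groups (M : {fset proc}) : {fset {fset proc}} :=
  [fset [fset p in M | ps p == v] | v in [fset ps p | p in M]].

Definition CG (n : nat) (M1 M2 : {fset proc}) : {fset ({fset proc} * {fset proc})} :=
  [fset x in groups M1 `*` groups M2 | `[< comparable_group n x.1 x.2 >]].

Definition Fbound (n : nat) (M1 M2 : {fset proc}) : nat :=
  \sum_(x <- CG n M1 M2) (#|` x.1| - minn #|` x.1| #|` x.2|).

Definition linker (n : nat) (L1 L2 : {fset proc}) (f : proc -> proc) : Prop :=
  [/\ {in L1, forall p, f p \in L2},
      {in L1 &, injective f}
    & {in L1, forall p1', exists p1 p2 : proc,
         [/\ spec n p1' p1, spec n (f p1') p2, ps p1 = ps p2
           & in_pref (psig p1) (psig p2)]}].

End Defs.

(* Main.v *)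
Require Import Defs.
From HB Require Import structures.
From mathcomp Require Import all_boot.
From mathcomp Require Import finmap.
From mathcomp Require Import boolp.
From mathcomp Require Import zify.
Local Open Scope fset_scope.

Section S.
Variables (C A S : choiceType).
Implicit Types (M : {fset proc C A S}).

Lemma groupsP M g : g \in groups M ->
  exists2 p0, p0 \in M & g = [fset q in M | ps q == ps p0].
Proof.
rewrite /groups => /imfsetP[v /= /imfsetP[p0 /= Hp0 ->] ->].
by exists p0.
Qed.

Lemma CG_char n M1 M2 x p : x \in CG n M1 M2 -> p \in x.1 ->
  x = ([fset q in M1 | ps q == ps p], [fset q in M2 | ps q == ps p]).
Proof.
rewrite /CG !inE /= => /andP[/andP[H1 H2] /asboolP Hc] Hp.
have [p1 Hp1 E1] := @groupsP _ _ H1.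
have [p2 Hp2 E2] := @groupsP _ _ H2.
have Hp2' : p2 \in x.2 by rewrite E2 !inE Hp2 eqxx.
have [Heq _] := Hc p p2 Hp Hp2'.
have Hp' := Hp; rewrite E1 !inE in Hp'; case/andP: Hp' => _ /eqP Hv1.
case: x H1 H2 Hc Hp Hp2' E1 E2 => x1 x2 /= _ _ _ _ _ -> ->.
by rewrite -Hv1 Heq.
Qed.


End S.
Arguments CG_char {C A S n M1 M2 x p}.

Theorem theorem3 (C A S : choiceType) (L1 L2 : {fset proc C A S})
  (bk : seq A) (n : nat) (f : proc C A S -> proc C A S) :
  simple_log L1 -> simple_log L2 -> 0 < n ->
  linker n L1 L2 f ->
  let M1 := ms L1 n bk in
  let M2 := ms L2 n bk in
  Fbound n M1 M2 <= #|` [fset p in M1 | f p \notin M2]| /\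
  (forall x, x \in CG n M1 M2 ->
     #|` x.1| - minn #|` x.1| #|` x.2| <= #|` [fset p in x.1 | f p \notin M2]|).
Proof.
move=> _ _ _ [Hmap Hinj Hps] M1 M2.
have psf : forall p, p \in L1 -> ps (f p) = ps p.
  move=> p /Hps [p1 [p2 [[_ _ e1] [_ _ e2] e _]]].
  by rewrite -e2 -e e1.
have M1L : forall p, p \in M1 -> p \in L1.
  by move=> p; rewrite /M1 /ms !inE => /andP[].
clearbody M1 M2.
have x1M1 : forall x p, x \in CG n M1 M2 -> p \in x.1 -> p \in M1.
  move=> x p Hx Hp; move: (Hp); rewrite (CG_char Hx Hp) /= !inE.
  by case/andP.
have part2 : forall x, x \in CG n M1 M2 ->
     #|` x.1| - minn #|` x.1| #|` x.2| <= #|` [fset p in x.1 | f p \notin M2]|.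
  move=> x Hx.
  set U := [fset p in x.1 | f p \in M2].
  set T := [fset p in x.1 | f p \notin M2].
  have eU : x.1 `&` U = U.
    by apply/fsetP => p; rewrite !inE; case: (p \in x.1); case: (f p \in M2).
  have eT : x.1 `\` U = T.
    by apply/fsetP => p; rewrite /U /T !inE; case: (p \in x.1); case: (f p \in M2).
  have cs := cardfsID U x.1; rewrite eU eT in cs.
  have U2 : #|` U| <= #|` x.2|.
    have <- : #|` f @` U| = #|` U|.
      apply/eqP/card_in_imfsetP => p q; rewrite !inE => /andP[Hp _] /andP[Hq _].
      by apply: Hinj; apply: M1L; apply: (x1M1 x).
    apply: fsubset_leq_card; apply/fsubsetP => q /imfsetP [p /=].
    rewrite !inE => /andP[Hp HfM] ->.
    rewrite (CG_char Hx Hp) /= !inE HfM /=.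
    by rewrite psf // M1L // (x1M1 x).
  rewrite -cs; lia.
split => //.
set T := [fset p in M1 | f p \notin M2].
apply: (@leq_trans (\sum_(x <- CG n M1 M2) \sum_(p <- T) (p \in x.1 : nat))).
  rewrite /Fbound big_seq [X in _ <= X]big_seq; apply: leq_sum => x Hx.
  apply: (leq_trans (part2 x Hx)).
  have -> : [fset p in x.1 | f p \notin M2] = [fset p in T | p \in x.1].
    apply/fsetP => p; rewrite /T !inE.
    case Hp: (p \in x.1); last by rewrite andbF.
    by rewrite (x1M1 x p Hx Hp) andbT.
  by rewrite card_fset_sum1 -big_fset_condE big_mkcond /=; apply: leq_sum => p _; case: (p \in x.1).
rewrite exchange_big /= card_fset_sum1; apply: leq_sum => p _.
set x0 := ([fset q in M1 | ps q == ps p], [fset q in M2 | ps q == ps p]).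
rewrite -big_mkcondr /=.
apply: (@leq_trans (\sum_(x <- CG n M1 M2 | x == x0) 1)).
  rewrite big_seq_cond [X in _ <= X]big_seq_cond.
  rewrite big_mkcond [X in _ <= X]big_mkcond; apply: leq_sum => x _.
  case Hx: (x \in _) => //=; case Hp: (p \in x.1) => //=.
  by rewrite /x0 -(CG_char Hx Hp) eqxx.
rewrite sum1_count (count_uniq_mem x0 (fset_uniq _)); by case: (x0 \in _).
Qed.
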